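(* Let $\mathcal{C},\mathcal{D}$ be $k$-linear Grothendieck categories and $F:\mathcal{C}\to\mathcal{D}$ a ($k$-linear, colimit preserving) functor with a left adjoint $L:\mathcal{D}\to\mathcal{C}$ and a right adjoint $R:\mathcal{D}\to\mathcal{C}$ (both $k$-linear and colimit preserving). The following are equivalent: (i) $R$ is a left quasi-adjoint of $F$; (ii) $R$ is a direct summand of a finite direct sum $L^{n}=\coprod_{i=1}^nL$ of copies of $L$ in the category of $k$-linear functors $\mathcal{D}\to\mathcal{C}$ and natural transformations, i.e. there are natural transformations $a:R\to L^n$, $b:L^n\to R$ with $b\circ a=\mathrm{id}_R$; (iii) $F$ is a left quasi-adjoint of $L$.
   Context: $k$ is a commutative ring. For functors $X:\mathcal{D}\to\mathcal{C}$ and $Y:\mathcal{C}\to\mathcal{D}$ (colimit preserving), $X$ is a left quasi-adjoint of $Y$ if there are $n\in\mathbb{N}$ and natural transformations $\eta:\mathrm{id}_{\mathcal{D}}\to\coprod_{i=1}^nYX$ and $\zeta:\coprod_{i=1}^nXY\to\mathrm{id}_{\mathcal{C}}$ such that $\zeta_{XD}\circ X\eta_D=\mathrm{id}_{XD}$ for all objects $D$ of $\mathcal{D}$ (using $X(\coprod YXD)\cong\coprod XYXD$). In (iii) this is applied with the roles of the two categories interchanged: $F:\mathcal{C}\to\mathcal{D}$ is a left quasi-adjoint of $L:\mathcal{D}\to\mathcal{C}$ if there are $\eta:\mathrm{id}_{\mathcal{C}}\to\coprod^nLF$, $\zeta:\coprod^nFL\to\mathrm{id}_{\mathcal{D}}$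 with $\zeta_{FC}\circ F\eta_C=\mathrm{id}_{FC}$ for all $C$. *)

(* Defs.v *)
From HB Require Import structures.
From mathcomp Require Import all_boot all_algebra.
Set Implicit Arguments.
Unset Strict Implicit.
Unset Printing Implicit Defensive.
Import GRing.Theory.
Local Open Scope ring_scope.

Record Cat := {
  cob : Type;
  chom : cob -> cob -> Type;
  cid : forall a, chom a a;
  ccomp : forall a b c, chom b c -> chom a b -> chom a c;
  ccomp_idl : forall a b (f : chom a b), ccomp (cid b) f = f;
  ccomp_idr : forall a b (f : chom a b), ccomp f (cid a) = f;
  ccomp_assoc : forall a b c d (f : chom a b) (g : chom b c) (h : chom c d),
      ccomp h (ccomp g f) = ccomp (ccomp h g) f }.
Arguments chom : clear implicits.
Arguments cid {J} a : rename.
Arguments ccomp {J a b c} : rename.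

Record kCat (k : comPzRingType) := {
  ob : Type;
  hom : ob -> ob -> lmodType k;
  idm : forall a, hom a a;
  comp : forall a b c, hom b c -> hom a b -> hom a c;
  comp_idl : forall a b (f : hom a b), comp (idm b) f = f;
  comp_idr : forall a b (f : hom a b), comp f (idm a) = f;
  comp_assoc : forall a b c d (f : hom a b) (g : hom b c) (h : hom c d),
      comp h (comp g f) = comp (comp h g) f;
  comp_linl : forall a b c (f : hom a b) (r : k) (g h : hom b c),
      comp (r *: g + h) f = r *: comp g f + comp h f;
  comp_linr : forall a b c (h : hom b c) (r : k) (f g : hom a b),
      comp h (r *: f + g) = r *: comp h f + comp h g }.
Arguments ob {k} C : rename.
Arguments hom {k C} : rename.
Arguments idm {k C} a : rename.
Arguments comp {k C a b c} : rename.

Section Cats.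
Variable k : comPzRingType.

Record Diagram (J : Cat) (C : kCat k) := {
  dob : cob J -> ob C;
  dmap : forall i j, chom J i j -> hom (dob i) (dob j);
  dmap_id : forall i, dmap (cid i) = idm (dob i);
  dmap_comp : forall i j l (u : chom J i j) (v : chom J j l),
      dmap (ccomp v u) = comp (dmap v) (dmap u) }.

Definition IsCocone (J : Cat) (C : kCat k) (A : cob J -> ob C)
  (m : forall i j, chom J i j -> hom (A i) (A j)) (X : ob C)
  (c : forall j, hom (A j) X) : Prop :=
  forall i j (u : chom J i j), comp (c j) (m i j u) = c i.

Definition IsColimit (J : Cat) (C : kCat k) (A : cob J -> ob C)
  (m : forall i j, chom J i j -> hom (A i) (A j)) (X : ob C)
  (c : forall j, hom (A j) X) : Prop :=
  IsCocone m c /\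
  forall Y (c' : forall j, hom (A j) Y), IsCocone m c' ->
    exists! h : hom X Y, forall j, comp h (c j) = c' j.

Definition Cocomplete (C : kCat k) : Prop :=
  forall (J : Cat) (D : Diagram J C),
    exists X (c : forall j, hom (dob D j) X), IsColimit (@dmap _ _ D) c.

Definition Filtered (J : Cat) : Prop :=
  inhabited (cob J) /\
  (forall i j : cob J, exists l, inhabited (chom J i l) /\ inhabited (chom J j l)) /\
  (forall i j (u v : chom J i j), exists l (w : chom J j l), ccomp w u = ccomp w v).

Definition Mono (C : kCat k) (a b : ob C) (f : hom a b) : Prop :=
  forall z (g h : hom z a), comp f g = comp f h -> g = h.

Definition Epi (C : kCat k) (a b : ob C) (f : hom a b) : Prop :=
  forall z (g h : hom b z), comp g f = comp h f -> g = h.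

Definition IsKernel (C : kCat k) (a b K : ob C) (f : hom a b) (i : hom K a) : Prop :=
  comp f i = 0 /\
  forall Z (g : hom Z a), comp f g = 0 -> exists! u : hom Z K, comp i u = g.

Definition IsCokernel (C : kCat k) (a b Q : ob C) (f : hom a b) (q : hom b Q) : Prop :=
  comp q f = 0 /\
  forall Z (g : hom b Z), comp g f = 0 -> exists! u : hom Q Z, comp u q = g.

Definition IsZeroObject (C : kCat k) (z : ob C) : Prop :=
  forall a : ob C, (forall f g : hom z a, f = g) /\ (forall f g : hom a z, f = g).

Definition IsBiproduct (C : kCat k) (a b p : ob C)
  (i1 : hom a p) (i2 : hom b p) (p1 : hom p a) (p2 : hom p b) : Prop :=
  comp p1 i1 = idm a /\ comp p2 i2 = idm b /\ comp p1 i2 = 0 /\ comp p2 i1 = 0 /\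
  comp i1 p1 + comp i2 p2 = idm p.

Definition Abelian (C : kCat k) : Prop :=
  (exists z : ob C, IsZeroObject z) /\
  (forall a b : ob C, exists p (i1 : hom a p) (i2 : hom b p) p1 p2,
      IsBiproduct i1 i2 p1 p2) /\
  (forall (a b : ob C) (f : hom a b), exists K (i : hom K a), IsKernel f i) /\
  (forall (a b : ob C) (f : hom a b), exists Q (q : hom b Q), IsCokernel f q) /\
  (forall (a b : ob C) (f : hom a b), Mono f ->
      exists Z (g : hom b Z), IsKernel g f) /\
  (forall (a b : ob C) (f : hom a b), Epi f ->
      exists Z (g : hom Z a), IsCokernel g f).

(* AB5: filtered colimits are exact, i.e. (in a cocomplete abelian category)
   a filtered colimit of monomorphisms is a monomorphism *)
Definition AB5 (C : kCat k) : Prop :=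
  forall (J : Cat), Filtered J ->
  forall (D1 D2 : Diagram J C) (al : forall j, hom (dob D1 j) (dob D2 j)),
    (forall i j (u : chom J i j),
        comp (al j) (dmap D1 u) = comp (dmap D2 u) (al i)) ->
    (forall j, Mono (al j)) ->
    forall X1 (c1 : forall j, hom (dob D1 j) X1) X2 (c2 : forall j, hom (dob D2 j) X2),
      IsColimit (@dmap _ _ D1) c1 -> IsColimit (@dmap _ _ D2) c2 ->
      forall h : hom X1 X2, (forall j, comp h (c1 j) = comp (c2 j) (al j)) ->
      Mono h.

Definition HasGenerator (C : kCat k) : Prop :=
  exists G : ob C, forall (a b : ob C) (f g : hom a b),
    (forall h : hom G a, comp f h = comp g h) -> f = g.

Definition Grothendieck (C : kCat k) : Prop :=
  Abelian C /\ Cocomplete C /\ AB5 C /\ HasGenerator C.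

Record kFunctor (C D : kCat k) := {
  fob : ob C -> ob D;
  fmap : forall a b, hom a b -> hom (fob a) (fob b);
  fmap_id : forall a, fmap (idm a) = idm (fob a);
  fmap_comp : forall a b c (f : hom a b) (g : hom b c),
      fmap (comp g f) = comp (fmap g) (fmap f);
  fmap_lin : forall a b (r : k) (f g : hom a b),
      fmap (r *: f + g) = r *: fmap f + fmap g }.

Definition PreservesColimits (C D : kCat k) (F : kFunctor C D) : Prop :=
  forall (J : Cat) (A : cob J -> ob C) (m : forall i j, chom J i j -> hom (A i) (A j))
    (X : ob C) (c : forall j, hom (A j) X),
    IsColimit m c ->
    IsColimit (fun i j u => fmap F (m i j u)) (fun j => fmap F (c j)).

Definition LeftAdjoint (C D : kCat k) (L : kFunctor D C) (F : kFunctor C D) : Prop :=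
  exists (eta : forall d, hom d (fob F (fob L d)))
         (eps : forall c, hom (fob L (fob F c)) c),
    (forall d d' (f : hom d d'),
        comp (eta d') f = comp (fmap F (fmap L f)) (eta d)) /\
    (forall c c' (f : hom c c'),
        comp f (eps c) = comp (eps c') (fmap L (fmap F f))) /\
    (forall d, comp (eps (fob L d)) (fmap L (eta d)) = idm (fob L d)) /\
    (forall c, comp (fmap F (eps c)) (eta (fob F c)) = idm (fob F c)).

Definition IsCoproduct (C : kCat k) (n : nat) (A : 'I_n -> ob C) (P : ob C)
  (inj : forall i, hom (A i) P) : Prop :=
  forall Z (f : forall i, hom (A i) Z),
    exists! u : hom P Z, forall i, comp u (inj i) = f i.
Arguments IsCoproduct {C n} A {P} inj.

(* P d (with injections iota d) is a coproduct of n copies of Y X d, so that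
   d |-> P d is the functor coprod^n YX (on morphisms f the induced map g with
   g \o iota d i = iota d' i \o YXf); similarly Q c is coprod^n XY c.
   eta : id => coprod^n YX, zeta : coprod^n XY => id, and the condition
   zeta_{Xd} \o X eta_d = id uses the canonical iso X(coprod YXd) = coprod XYXd,
   i.e. the map psi with psi \o X(iota d i) = kappa (X d) i. *)
Definition LeftQuasiAdjoint (C D : kCat k) (X : kFunctor D C) (Y : kFunctor C D) : Prop :=
  exists (n : nat)
    (P : ob D -> ob D) (iota : forall d (i : 'I_n), hom (fob Y (fob X d)) (P d))
    (Q : ob C -> ob C) (kappa : forall c (i : 'I_n), hom (fob X (fob Y c)) (Q c))
    (eta : forall d, hom d (P d)) (zeta : forall c, hom (Q c) c),
    (forall d, IsCoproduct (fun _ => fob Y (fob X d)) (iota d)) /\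
    (forall c, IsCoproduct (fun _ => fob X (fob Y c)) (kappa c)) /\
    (forall d d' (f : hom d d') (g : hom (P d) (P d')),
        (forall i, comp g (iota d i) = comp (iota d' i) (fmap Y (fmap X f))) ->
        comp (eta d') f = comp g (eta d)) /\
    (forall c c' (f : hom c c') (g : hom (Q c) (Q c')),
        (forall i, comp g (kappa c i) = comp (kappa c' i) (fmap X (fmap Y f))) ->
        comp f (zeta c) = comp (zeta c') g) /\
    (forall d (psi : hom (fob X (P d)) (Q (fob X d))),
        (forall i, comp psi (fmap X (iota d i)) = kappa (fob X d) i) ->
        comp (zeta (fob X d)) (comp psi (fmap X (eta d))) = idm (fob X d)).

(* R : D -> C is a direct summand of L^n = coprod_{i<n} L in the category of
   k-linear functors D -> C: P d (with injections iota d) is a coproduct of n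
   copies of L d (the functor L^n), a : R => L^n, b : L^n => R natural, b \o a = id. *)
Definition SummandOfCopies (C D : kCat k) (R L : kFunctor D C) : Prop :=
  exists (n : nat)
    (P : ob D -> ob C) (iota : forall d (i : 'I_n), hom (fob L d) (P d))
    (a : forall d, hom (fob R d) (P d)) (b : forall d, hom (P d) (fob R d)),
    (forall d, IsCoproduct (fun _ => fob L d) (iota d)) /\
    (forall d d' (f : hom d d') (g : hom (P d) (P d')),
        (forall i, comp g (iota d i) = comp (iota d' i) (fmap L f)) ->
        comp (a d') (fmap R f) = comp g (a d)) /\
    (forall d d' (f : hom d d') (g : hom (P d) (P d')),
        (forall i, comp g (iota d i) = comp (iota d' i) (fmap L f)) ->
        comp (fmap R f) (b d) = comp (b d') g) /\
    (forall d, comp (b d) (a d) = idm (fob R d)).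

End Cats.

(* Main.v *)
From Pilot Require Import Defs.
From mathcomp Require Import all_boot all_algebra.
From Stdlib Require Import ClassicalEpsilon.
Import Pilot.Defs.
Set Implicit Arguments.
Unset Strict Implicit.
Unset Printing Implicit Defensive.
Import GRing.Theory.
Local Open Scope ring_scope.

Section Basics.
Variable k : comPzRingType.

Lemma comp_addl (C : kCat k) (a b c : ob C) (f : hom a b) (g h : hom b c) :
  comp (g + h) f = comp g f + comp h f.
Proof. by have := comp_linl f 1 g h; rewrite !scale1r. Qed.

Lemma comp_addr (C : kCat k) (a b c : ob C) (h : hom b c) (f g : hom a b) :
  comp h (f + g) = comp h f + comp h g.
Proof. by have := comp_linr h 1 f g; rewrite !scale1r. Qed.

Lemma comp0l (C : kCat k) (a b c : ob C) (f : hom a b) :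
  comp (0 : hom b c) f = 0.
Proof.
have H : comp (0 : hom b c) f + comp 0 f = comp 0 f + 0.
  by rewrite addr0 -comp_addl addr0.
exact: (addrI _ H).
Qed.

Lemma comp0r (C : kCat k) (a b c : ob C) (h : hom b c) :
  comp h (0 : hom a b) = 0.
Proof.
have H : comp h (0 : hom a b) + comp h 0 = comp h 0 + 0.
  by rewrite addr0 -comp_addr addr0.
exact: (addrI _ H).
Qed.

Lemma comp_suml (C : kCat k) (a b c : ob C) (f : hom a b) n (g : 'I_n -> hom b c) :
  comp (\sum_i g i) f = \sum_i comp (g i) f.
Proof.
apply: (big_morph (fun x => comp x f)); last exact: comp0l.
by move=> x y; rewrite comp_addl.
Qed.

Lemma comp_sumr (C : kCat k) (a b c : ob C) (h : hom b c) n (g : 'I_n -> hom a b) :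
  comp h (\sum_i g i) = \sum_i comp h (g i).
Proof.
apply: (big_morph (fun x => comp h x)); last exact: comp0r.
by move=> x y; rewrite comp_addr.
Qed.

Lemma fmap_add (C D : kCat k) (F : kFunctor C D) (a b : ob C) (f g : hom a b) :
  fmap F (f + g) = fmap F f + fmap F g.
Proof. by have := fmap_lin F 1 f g; rewrite !scale1r. Qed.

Lemma fmap0 (C D : kCat k) (F : kFunctor C D) (a b : ob C) :
  fmap F (0 : hom a b) = 0.
Proof.
have H : fmap F (0 : hom a b) + fmap F 0 = fmap F 0 + 0.
  by rewrite addr0 -fmap_add addr0.
exact: (addrI _ H).
Qed.

Lemma fmap_sum (C D : kCat k) (F : kFunctor C D) (a b : ob C) n (g : 'I_n -> hom a b) :
  fmap F (\sum_i g i) = \sum_i fmap F (g i).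
Proof.
apply: (big_morph (fun x : hom a b => fmap F x)); last exact: fmap0.
by move=> x y; rewrite fmap_add.
Qed.

Definition Copr (C : kCat k) n (A P : ob C) (inj : 'I_n -> hom A P)
  (pr : 'I_n -> hom P A) : Prop :=
  (forall i j, comp (pr i) (inj j) = if i == j then idm A else 0) /\
  \sum_i comp (inj i) (pr i) = idm P.

Lemma sum_delta (V : zmodType) n (j : 'I_n) (x : V) :
  \sum_(i < n) (if i == j then x else 0) = x.
Proof.
rewrite (bigD1 j) //= eqxx big1 ?addr0 // => i /negbTE -> //.
Qed.

Lemma sum_delta' (V : zmodType) n (j : 'I_n) (x : V) :
  \sum_(i < n) (if j == i then x else 0) = x.
Proof.
rewrite (bigD1 j) //= eqxx big1 ?addr0 // => i; rewrite eq_sym => /negbTE -> //.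
Qed.

Lemma copr_sum_inj (C : kCat k) n (A P B : ob C) inj pr :
  @Copr C n A P inj pr -> forall (h : 'I_n -> hom A B) i,
  comp (\sum_j comp (h j) (pr j)) (inj i) = h i.
Proof.
move=> [H1 H2] h i; rewrite comp_suml.
rewrite (eq_bigr (fun j => if j == i then h i else 0)) ?sum_delta // => j _.
rewrite -comp_assoc H1; case: eqP => [->|_]; [exact: comp_idr| exact: comp0r].
Qed.

Lemma copr_proj_sum (C : kCat k) n (A P B : ob C) inj pr :
  @Copr C n A P inj pr -> forall (h : 'I_n -> hom B A) i,
  comp (pr i) (\sum_j comp (inj j) (h j)) = h i.
Proof.
move=> [H1 H2] h i; rewrite comp_sumr.
rewrite (eq_bigr (fun j => if i == j then h i else 0)) ?sum_delta' // => j _.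
rewrite comp_assoc H1; case: eqP => [->|_]; [exact: comp_idl| exact: comp0l].
Qed.

Lemma copr_decomp (C : kCat k) n (A P B : ob C) inj pr :
  @Copr C n A P inj pr -> forall (g : hom P B),
  g = \sum_j comp (comp g (inj j)) (pr j).
Proof.
move=> [H1 H2] g.
rewrite -{1}(comp_idr g) -H2 comp_sumr.
by apply: eq_bigr => j _; rewrite comp_assoc.
Qed.

Lemma copr_decomp' (C : kCat k) n (A P B : ob C) inj pr :
  @Copr C n A P inj pr -> forall (g : hom B P),
  g = \sum_j comp (inj j) (comp (pr j) g).
Proof.
move=> [H1 H2] g.
rewrite -{1}(comp_idl g) -H2 comp_suml.
by apply: eq_bigr => j _; rewrite comp_assoc.
Qed.

Lemma IsCoproduct_copr (C : kCat k) n (A P : ob C) inj pr :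
  @Copr C n A P inj pr -> @IsCoproduct k C n (fun _ => A) P inj.
Proof.
move=> Hc Z f; exists (\sum_j comp (f j) (pr j)); split.
  by move=> i; rewrite (copr_sum_inj Hc).
move=> u Hu; rewrite (copr_decomp Hc u).
by apply: eq_bigr => j _; rewrite Hu.
Qed.

Lemma copr_IsCoproduct (C : kCat k) n (A P : ob C) (inj : 'I_n -> hom A P) :
  @IsCoproduct k C n (fun _ => A) P inj -> exists pr, Copr inj pr.
Proof.
move=> H.
have [pr Hpr] : exists pr : 'I_n -> hom P A,
    forall i j, comp (pr i) (inj j) = if i == j then idm A else 0.
  apply: (fin_all_exists (P := fun i (p : hom P A) => forall j,
             comp p (inj j) = if i == j then idm A else 0)) => i.
  by have [u [Hu _]] := H A (fun j => if i == j then idm A else 0); exists u.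
exists pr; split => //.
have [u [_ Hu]] := H P inj.
rewrite -(Hu (idm P)); last by move=> i; rewrite comp_idl.
symmetry; apply: Hu => i; rewrite comp_suml.
rewrite (eq_bigr (fun j => if j == i then inj i else 0)) ?sum_delta // => j _.
rewrite -comp_assoc Hpr; case: eqP => [->|_]; [exact: comp_idr| exact: comp0r].
Qed.

Lemma copr_map (C D : kCat k) (F : kFunctor C D) n (A P : ob C) inj pr :
  @Copr C n A P inj pr -> Copr (fun i => fmap F (inj i)) (fun i => fmap F (pr i)).
Proof.
move=> [H1 H2]; split.
  by move=> i j; rewrite -fmap_comp H1; case: eqP => _; rewrite ?fmap_id ?fmap0.
by rewrite -fmap_id -H2 fmap_sum; apply: eq_bigr => i _; rewrite fmap_comp.
Qed.

Record CoprData (C : kCat k) n (A : ob C) :=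
  { cp_ob : ob C; cp_inj : 'I_n -> hom A cp_ob; cp_pr : 'I_n -> hom cp_ob A }.

Lemma unlift_widen n (i : 'I_n) : unlift ord_max (widen_ord (leqnSn n) i) = Some i.
Proof.
have -> : widen_ord (leqnSn n) i = lift ord_max i by apply: val_inj; rewrite /= /bump leqNgt ltn_ord.
exact: liftK.
Qed.

Lemma copr_exists (C : kCat k) : Abelian C ->
  forall n (A : ob C), exists X : CoprData n A, Copr (cp_inj X) (cp_pr X).
Proof.
move=> [[z Hz] [Hbip _]] n A; elim: n => [|n [X [H1 H2]]].
  exists (Build_CoprData (cp_ob := z) (fun _ => 0) (fun _ => 0)); split.
    by case.
  by rewrite big_ord0; apply: (Hz z).1.
have [p [i1 [i2 [p1 [p2 [B1 [B2 [B3 [B4 B5]]]]]]]]] := Hbip (cp_ob X) A.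
pose inj (i : 'I_n.+1) : hom A p :=
  if unlift ord_max i is Some j then comp i1 (cp_inj X j) else i2.
pose pr (i : 'I_n.+1) : hom p A :=
  if unlift ord_max i is Some j then comp (cp_pr X j) p1 else p2.
exists (Build_CoprData (cp_ob := p) inj pr); split => /=.
  move=> i j; rewrite /inj /pr.
  case: (unliftP ord_max i) => [i'|] ->; case: (unliftP ord_max j) => [j'|] ->;
    rewrite ?liftK ?unlift_none ?eqxx.
  - rewrite (inj_eq (@lift_inj _ ord_max)) -H1 comp_assoc -[comp (comp _ p1) i1]comp_assoc.
    by rewrite B1 comp_idr.
  - rewrite eq_sym (negbTE (neq_lift _ _)) -comp_assoc B3 comp0r //.
  - by rewrite (negbTE (neq_lift _ _)) comp_assoc B4 comp0l.
  - exact: B2.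
rewrite big_ord_recr /= /inj /pr unlift_none.
rewrite (eq_bigr (fun j => comp i1 (comp (comp (cp_inj X j) (cp_pr X j)) p1))); last first.
  by move=> j _; rewrite unlift_widen !comp_assoc.
by rewrite -comp_sumr -comp_suml H2 comp_idl.
Qed.


Lemma copr_mapmor (C : kCat k) n (A A' P P' : ob C) inj pr inj' pr'
  (h : hom A A') (g : hom P P') :
  @Copr C n A P inj pr -> @Copr C n A' P' inj' pr' ->
  (forall j, comp g (inj j) = comp (inj' j) h) ->
  forall i, comp (pr' i) g = comp h (pr i).
Proof.
move=> H1 H2 Hg i; rewrite (copr_decomp H1 g).
rewrite (eq_bigr (fun j => comp (inj' j) (comp h (pr j)))) ?(copr_proj_sum H2) //.
by move=> j _; rewrite Hg comp_assoc.
Qed.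

Definition cid' := constructive_indefinite_description.

Definition QA_fam (C D : kCat k) (X : kFunctor D C) (Y : kFunctor C D) n
  (eta : 'I_n -> forall d, hom d (fob Y (fob X d)))
  (zeta : 'I_n -> forall c, hom (fob X (fob Y c)) c) : Prop :=
 (forall i d d' (f : hom d d'), comp (eta i d') f = comp (fmap Y (fmap X f)) (eta i d)) /\
 (forall i c c' (f : hom c c'), comp f (zeta i c) = comp (zeta i c') (fmap X (fmap Y f))) /\
 (forall d, \sum_i comp (zeta i (fob X d)) (fmap X (eta i d)) = idm (fob X d)).

Lemma LQA_iff (C D : kCat k) (X : kFunctor D C) (Y : kFunctor C D) :
  Abelian C -> Abelian D ->
  LeftQuasiAdjoint X Y <-> exists n eta zeta, @QA_fam C D X Y n eta zeta.
Proof.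
move=> HC HD; split.
  case=> n [P [iota [Q [kappa [eta [zeta [HP [HQ [Heta [Hzeta Hpsi]]]]]]]]]].
  have [prP HprP] : exists prP : forall d, 'I_n -> hom (P d) (fob Y (fob X d)),
      forall d, Copr (iota d) (prP d).
    exists (fun d => proj1_sig (cid' (copr_IsCoproduct (HP d)))).
    by move=> d; exact: (proj2_sig (cid' (copr_IsCoproduct (HP d)))).
  have [prQ HprQ] : exists prQ : forall c, 'I_n -> hom (Q c) (fob X (fob Y c)),
      forall c, Copr (kappa c) (prQ c).
    exists (fun c => proj1_sig (cid' (copr_IsCoproduct (HQ c)))).
    by move=> c; exact: (proj2_sig (cid' (copr_IsCoproduct (HQ c)))).
  exists n, (fun i d => comp (prP d i) (eta d)), (fun i c => comp (zeta c) (kappa c i)).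
  split; [|split].
  - move=> i d d' f.
    pose g := \sum_j comp (comp (iota d' j) (fmap Y (fmap X f))) (prP d j).
    have Hg : forall j, comp g (iota d j) = comp (iota d' j) (fmap Y (fmap X f)).
      by move=> j; rewrite (copr_sum_inj (HprP d)).
    rewrite -comp_assoc (Heta _ _ f g Hg) comp_assoc; 
    by rewrite !comp_assoc (copr_mapmor (HprP d) (HprP d') Hg).
  - move=> i c c' f.
    pose g := \sum_j comp (comp (kappa c' j) (fmap X (fmap Y f))) (prQ c j).
    have Hg : forall j, comp g (kappa c j) = comp (kappa c' j) (fmap X (fmap Y f)).
      by move=> j; rewrite (copr_sum_inj (HprQ c)).
    by rewrite comp_assoc (Hzeta _ _ f g Hg) -comp_assoc Hg comp_assoc.
  - move=> d.
    pose psi := \sum_j comp (kappa (fob X d) j) (fmap X (prP d j)).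
    have Hp : forall i, comp psi (fmap X (iota d i)) = kappa (fob X d) i.
      by move=> i; rewrite (copr_sum_inj (copr_map X (HprP d))).
    rewrite -(Hpsi d psi Hp) /psi comp_suml comp_sumr.
    by apply: eq_bigr => i _; rewrite fmap_comp !comp_assoc.
case=> n [eta [zeta [He [Hz Hs]]]].
pose cd d := proj1_sig (cid' (copr_exists HD n (fob Y (fob X d)))).
have Hcd : forall d, Copr (cp_inj (cd d)) (cp_pr (cd d)).
  by move=> d; exact: (proj2_sig (cid' (copr_exists HD n (fob Y (fob X d))))).
pose cq c := proj1_sig (cid' (copr_exists HC n (fob X (fob Y c)))).
have Hcq : forall c, Copr (cp_inj (cq c)) (cp_pr (cq c)).
  by move=> c; exact: (proj2_sig (cid' (copr_exists HC n (fob X (fob Y c))))).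
exists n, (fun d => cp_ob (cd d)), (fun d => cp_inj (cd d)),
  (fun c => cp_ob (cq c)), (fun c => cp_inj (cq c)),
  (fun d => \sum_i comp (cp_inj (cd d) i) (eta i d)),
  (fun c => \sum_i comp (zeta i c) (cp_pr (cq c) i)).
split; [by move=> d; exact: IsCoproduct_copr (Hcd d)|].
split; [by move=> c; exact: IsCoproduct_copr (Hcq c)|].
split; [|split].
- move=> d d' f g Hg /=; rewrite comp_suml comp_sumr; apply: eq_bigr => i _.
  by rewrite -comp_assoc He comp_assoc -Hg -comp_assoc.
- move=> c c' f g Hg /=; rewrite comp_sumr comp_suml; apply: eq_bigr => i _.
  rewrite comp_assoc Hz -!comp_assoc; congr (comp _ _).
  by rewrite (copr_mapmor (Hcq c) (Hcq c') Hg).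
- move=> d psi Hp /=.
  rewrite -(Hs d) fmap_sum !comp_sumr; apply: eq_bigr => i _.
  rewrite fmap_comp (comp_assoc _ _ psi) Hp comp_assoc; congr (comp _ _).
  exact: (copr_sum_inj (Hcq _)).
Qed.

Definition SC_fam (C D : kCat k) (R L : kFunctor D C) n
  (a : 'I_n -> forall d, hom (fob R d) (fob L d))
  (b : 'I_n -> forall d, hom (fob L d) (fob R d)) : Prop :=
 (forall i d d' (f : hom d d'), comp (a i d') (fmap R f) = comp (fmap L f) (a i d)) /\
 (forall i d d' (f : hom d d'), comp (fmap R f) (b i d) = comp (b i d') (fmap L f)) /\
 (forall d, \sum_i comp (b i d) (a i d) = idm (fob R d)).

Lemma SC_iff (C D : kCat k) (R L : kFunctor D C) :
  Abelian C -> SummandOfCopies R L <-> exists n a b, @SC_fam C D R L n a b.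
Proof.
move=> HC; split.
  case=> n [P [iota [a [b [HP [Ha [Hb Hba]]]]]]].
  have [prP HprP] : exists prP : forall d, 'I_n -> hom (P d) (fob L d),
      forall d, Copr (iota d) (prP d).
    exists (fun d => proj1_sig (cid' (copr_IsCoproduct (HP d)))).
    by move=> d; exact: (proj2_sig (cid' (copr_IsCoproduct (HP d)))).
  exists n, (fun i d => comp (prP d i) (a d)), (fun i d => comp (b d) (iota d i)).
  split; [|split].
  - move=> i d d' f.
    pose g := \sum_j comp (comp (iota d' j) (fmap L f)) (prP d j).
    have Hg : forall j, comp g (iota d j) = comp (iota d' j) (fmap L f).
      by move=> j; rewrite (copr_sum_inj (HprP d)).
    rewrite -comp_assoc (Ha _ _ f g Hg) !comp_assoc.
    by rewrite (copr_mapmor (HprP d) (HprP d') Hg).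
  - move=> i d d' f.
    pose g := \sum_j comp (comp (iota d' j) (fmap L f)) (prP d j).
    have Hg : forall j, comp g (iota d j) = comp (iota d' j) (fmap L f).
      by move=> j; rewrite (copr_sum_inj (HprP d)).
    by rewrite comp_assoc (Hb _ _ f g Hg) -!comp_assoc Hg.
  - move=> d; rewrite -(Hba d).
    transitivity (comp (b d) (comp (\sum_i comp (iota d i) (prP d i)) (a d))).
      by rewrite comp_suml comp_sumr; apply: eq_bigr => i _; rewrite !comp_assoc.
    by rewrite (HprP d).2 comp_idl.
case=> n [a [b [Ha [Hb Hs]]]].
pose cd d := proj1_sig (cid' (copr_exists HC n (fob L d))).
have Hcd : forall d, Copr (cp_inj (cd d)) (cp_pr (cd d)).
  by move=> d; exact: (proj2_sig (cid' (copr_exists HC n (fob L d)))).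
exists n, (fun d => cp_ob (cd d)), (fun d => cp_inj (cd d)),
  (fun d => \sum_i comp (cp_inj (cd d) i) (a i d)),
  (fun d => \sum_i comp (b i d) (cp_pr (cd d) i)).
split; [by move=> d; exact: IsCoproduct_copr (Hcd d)|].
split; [|split].
- move=> d d' f g Hg /=; rewrite comp_suml comp_sumr; apply: eq_bigr => i _.
  by rewrite -comp_assoc Ha comp_assoc -Hg -comp_assoc.
- move=> d d' f g Hg /=; rewrite comp_sumr comp_suml; apply: eq_bigr => i _.
  rewrite comp_assoc Hb -!comp_assoc; congr (comp _ _).
  by rewrite (copr_mapmor (Hcd d) (Hcd d') Hg).
- move=> d /=; rewrite -(Hs d) comp_suml; apply: eq_bigr => i _.
  by rewrite -comp_assoc (copr_proj_sum (Hcd d)).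
Qed.


Lemma mate1 (C D : kCat k) (L R : kFunctor D C) (F : kFunctor C D) :
  LeftAdjoint L F ->
  (exists n eta zeta, @QA_fam C D R F n eta zeta) <->
  (exists n a b, @SC_fam C D R L n a b).
Proof.
case=> [e1 [c1 [N1 [N2 [T1 T2]]]]]; split.
  case=> n [eta [zeta [He [Hz Hs]]]].
  exists n, (fun i d => comp (zeta i (fob L d)) (fmap R (e1 d))),
    (fun i d => comp (c1 (fob R d)) (fmap L (eta i d))).
  split; [|split].
  - move=> i d d' f.
    rewrite -comp_assoc -fmap_comp N1 fmap_comp comp_assoc -Hz.
    by rewrite !comp_assoc.
  - move=> i d d' f.
    rewrite comp_assoc N2 -comp_assoc -fmap_comp -He fmap_comp.
    by rewrite !comp_assoc.
  - move=> d; rewrite -(Hs d); apply: eq_bigr => i _.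
    have E : comp (fmap F (comp (c1 (fob R d)) (fmap L (eta i d)))) (e1 d) = eta i d.
      rewrite fmap_comp -comp_assoc -N1 comp_assoc T2; exact: comp_idl.
    by rewrite comp_assoc Hz -comp_assoc -fmap_comp E.
case=> n [a [b [Ha [Hb Hs]]]].
exists n, (fun i d => comp (fmap F (b i d)) (e1 d)),
  (fun i c => comp (c1 c) (a i (fob F c))).
split; [|split].
- move=> i d d' f.
  rewrite -comp_assoc N1 comp_assoc -fmap_comp -Hb fmap_comp.
  by rewrite !comp_assoc.
- move=> i c c' f.
  rewrite comp_assoc N2 -comp_assoc -Ha.
  by rewrite !comp_assoc.
- move=> d; rewrite -(Hs d); apply: eq_bigr => i _.
  have E : comp (c1 (fob R d)) (fmap L (comp (fmap F (b i d)) (e1 d))) = b i d.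
    rewrite fmap_comp comp_assoc -N2 -comp_assoc T1; exact: comp_idr.
  by rewrite -comp_assoc Ha comp_assoc E.
Qed.


Lemma mate2 (C D : kCat k) (L R : kFunctor D C) (F : kFunctor C D) :
  LeftAdjoint F R ->
  (exists n a b, @SC_fam C D R L n a b) <->
  (exists n eta zeta, @QA_fam D C F L n eta zeta).
Proof.
case=> [e2 [c2 [N1 [N2 [T1 T2]]]]]; split.
  case=> n [a [b [Ha [Hb Hs]]]].
  exists n, (fun i c => comp (a i (fob F c)) (e2 c)),
    (fun i d => comp (c2 d) (fmap F (b i d))).
  split; [|split].
  - move=> i c c' f.
    rewrite -comp_assoc N1 comp_assoc Ha.
    by rewrite !comp_assoc.
  - move=> i d d' f.
    rewrite comp_assoc N2 -comp_assoc -fmap_comp Hb fmap_comp.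
    by rewrite !comp_assoc.
  - move=> c.
    transitivity (comp (c2 (fob F c))
       (comp (fmap F (\sum_i comp (b i (fob F c)) (a i (fob F c)))) (fmap F (e2 c)))).
      rewrite fmap_sum comp_suml comp_sumr; apply: eq_bigr => i _.
      by rewrite !fmap_comp !comp_assoc.
    by rewrite Hs fmap_id comp_idl T1.
case=> n [eta [zeta [He [Hz Hs]]]].
exists n, (fun i d => comp (fmap L (c2 d)) (eta i (fob R d))),
  (fun i d => comp (fmap R (zeta i d)) (e2 (fob L d))).
split; [|split].
- move=> i d d' f.
  rewrite -comp_assoc He comp_assoc -fmap_comp -N2 fmap_comp.
  by rewrite !comp_assoc.
- move=> i d d' f.
  rewrite comp_assoc -fmap_comp Hz fmap_comp -comp_assoc -N1.
  by rewrite !comp_assoc.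
- move=> d.
  transitivity (comp (fmap R (c2 d))
     (comp (fmap R (\sum_i comp (zeta i (fob F (fob R d))) (fmap F (eta i (fob R d)))))
        (e2 (fob R d)))); last by rewrite Hs fmap_id comp_idl T2.
  rewrite fmap_sum comp_suml comp_sumr; apply: eq_bigr => i _.
  have E1 : comp (e2 (fob L d)) (fmap L (c2 d)) =
            comp (fmap R (fmap F (fmap L (c2 d)))) (e2 (fob L (fob F (fob R d)))).
    exact: N1.
  have E2 : comp (fmap R (zeta i d)) (fmap R (fmap F (fmap L (c2 d)))) =
            comp (fmap R (c2 d)) (fmap R (zeta i (fob F (fob R d)))).
    by rewrite -!fmap_comp Hz.
  have E3 : comp (e2 (fob L (fob F (fob R d)))) (eta i (fob R d)) =
            comp (fmap R (fmap F (eta i (fob R d)))) (e2 (fob R d)).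
    exact: N1.
  rewrite -comp_assoc [comp (e2 _) _]comp_assoc E1 -comp_assoc comp_assoc E2 E3.
  by rewrite fmap_comp !comp_assoc.
Qed.


End Basics.

Theorem theorem2p5 (k : comPzRingType) (C D : kCat k)
  (F : kFunctor C D) (L R : kFunctor D C) :
  Grothendieck C -> Grothendieck D ->
  PreservesColimits F -> PreservesColimits L -> PreservesColimits R ->
  LeftAdjoint L F -> LeftAdjoint F R ->
  (LeftQuasiAdjoint R F <-> SummandOfCopies R L) /\
  (SummandOfCopies R L <-> LeftQuasiAdjoint F L).
Proof.
move=> HC HD _ _ _ HLF HFR.
have A1 := @LQA_iff k C D R F HC.1 HD.1.
have A3 := @LQA_iff k D C F L HD.1 HC.1.
have S := @SC_iff k C D R L HC.1.
have M1 := mate1 R HLF.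
have M2 := mate2 L HFR.
tauto.
Qed.
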